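(* For $(c,d)\in\mathbb{C}\times\mathbb{C}^*$ let $f_{c,d}(z) = 1 + \frac cz + \frac d{z^2}$, with critical points $0$ and $-2d/c$ ($=\infty$ when $c=0$), and identify $(c,d)$ with $[c:d:1]\in\mathbb{CP}^2$. Let $\mathcal{X}_n$ be the set of $(c,d)\in\mathbb{C}\times\mathbb{C}^*$ such that $0$ is periodic under $f_{c,d}$ with period dividing $n$, and $\mathcal{Y}_m$ the set of $(c,d)\in\mathbb{C}\times\mathbb{C}^*$ such that $-2d/c$ is periodic under $f_{c,d}$ with period dividing $m$, with closures $\overline{\mathcal{X}_n}$, $\overline{\mathcal{Y}_m}$ in $\mathbb{CP}^2$. Then for all $n\ge 3$ and $m\ge 1$, \[ \overline{\mathcal{X}_n}\cap\overline{\mathcal{Y}_m}\cap\{[c:d:0] \in \mathbb{CP}^2\} = \emptyset. \] *)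

(* Defs.v *)
From HB Require Import structures.
From mathcomp Require Import all_boot all_order all_algebra.
From mathcomp Require Import complex reals.
Set Implicit Arguments. Unset Strict Implicit. Unset Printing Implicit Defensive.
Import Order.TTheory GRing.Theory Num.Theory.
Local Open Scope ring_scope.

Section Defs.
Variable R : realType.
Local Notation C := R[i].

(* Points of the Riemann sphere: Some z = z in C, None = infinity. *)
Definition sphere := option C.

(* f_{c,d}(z) = 1 + c/z + d/z^2 on the Riemann sphere (for d <> 0):
   f(infinity) = 1, f(0) = infinity. *)
Definition fcd (c d : C) (z : sphere) : sphere :=
  match z with
  | None => Some 1
  | Some w => if w == 0 then None else Some (1 + c / w + d / w ^+ 2)
  end.

Definition crit2 (c d : C) : sphere :=
  if c == 0 then None else Some (- (2%:R * d) / c).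

Definition Xset (n : nat) (p : C * C) : Prop :=
  p.2 != 0 /\ iter n (fcd p.1 p.2) (Some 0) = Some 0.

Definition Yset (m : nat) (p : C * C) : Prop :=
  p.2 != 0 /\ iter m (fcd p.1 p.2) (crit2 p.1 p.2) = crit2 p.1 p.2.

Definition cvgC (u : nat -> C) (l : C) : Prop :=
  forall e : C, 0 < e -> exists N : nat, forall k : nat, (N <= k)%N -> `|u k - l| < e.

(* [c0:d0:0] (with (c0,d0) <> (0,0)) lies in the closure in CP^2 of
   S ⊆ C x C* (embedded via (c,d) |-> [c:d:1]): there is a sequence in S whose
   images converge in CP^2 to [c0:d0:0], i.e. admit homogeneous representatives
   lam_k (c_k, d_k, 1) converging to (c0, d0, 0) in C^3. *)
Definition in_closure_at_infinity (S : C * C -> Prop) (c0 d0 : C) : Prop :=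
  exists (u : nat -> C * C) (lam : nat -> C),
    (forall k, S (u k)) /\ (forall k, lam k != 0) /\
    cvgC (fun k => lam k * (u k).1) c0 /\
    cvgC (fun k => lam k * (u k).2) d0 /\
    cvgC lam 0.
End Defs.

(* Main.v *)
Require Import Defs.
From HB Require Import structures.
From mathcomp Require Import all_boot all_order all_algebra.
From mathcomp Require Import complex reals.
From mathcomp Require Import ring lra.
Import Order.TTheory GRing.Theory Num.Theory.
Local Open Scope ring_scope.

Section S.
Variable R : realType.
Local Notation C := R[i].
Local Notation ReC := (@complex.Re R).
Local Notation ImC := (@complex.Im R).

Lemma ReD (x y : C) : ReC (x + y) = ReC x + ReC y.
Proof. case: x => a b; case: y => c e; reflexivity. Qed.
Lemma ReN (x : C) : ReC (- x) = - ReC x.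
Proof. case: x => a b; reflexivity. Qed.
Lemma ReV (x : C) : ReC (x^-1) = ReC x / (ReC x ^+ 2 + ImC x ^+ 2).
Proof. case: x => a b; reflexivity. Qed.
Lemma Re1 : ReC (1 : C) = 1. Proof. by []. Qed.
Lemma Re0 : ReC (0 : C) = 0. Proof. by []. Qed.

Lemma ReV_pos (x : C) : 0 < ReC x -> 0 < ReC (x^-1).
Proof.
rewrite ReV => h; apply: divr_gt0 => //.
apply: ltr_wpDr; first exact: sqr_ge0.
by rewrite exprn_gt0.
Qed.
Lemma ReV_neg (x : C) : ReC x < 0 -> ReC (x^-1) < 0.
Proof.
rewrite ReV => h; rewrite pmulr_llt0 ?invr_gt0 //.
apply: ltr_wpDr; first exact: sqr_ge0.
by rewrite -sqrrN exprn_gt0 // oppr_gt0.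
Qed.

Definition pt (x : C * C) : sphere R := if x.2 == 0 then None else Some (x.1 / x.2).
Definition stf (t c d : C) (x : C * C) : C * C :=
  (t * x.1 ^+ 2 + c * x.1 * x.2 + d * x.2 ^+ 2, x.1 ^+ 2).
Definition stl (t c d : C) (x : C * C) : C * C :=
  (x.1 ^+ 2 + c * x.1 * x.2 + t * d * x.2 ^+ 2, x.1 ^+ 2).
Fixpoint orb (t c d : C) (k : nat) (x : C * C) : C * C :=
  match k with 0 => x | k'.+1 => (if odd k' then stl t c d else stf t c d) (orb t c d k' x) end.
Definition rep (t : C) (k : nat) (x : C * C) : C * C := (x.1, t ^+ odd k * x.2).

Lemma fcd_pt (c d p q : C) : d != 0 -> (p, q) != (0, 0) ->
  fcd c d (pt (p, q)) = pt (p ^+ 2 + c * p * q + d * q ^+ 2, p ^+ 2).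
Proof.
move=> d0; rewrite /pt /= xpair_eqE.
have [->|q0] := eqVneq q 0.
  rewrite andbT => p0 /=.
  rewrite expf_eq0 (negPf p0) andbF; congr Some; field.
  by [].
move=> _.
have [->|p0] := eqVneq p 0.
  by rewrite mul0r /= eqxx exprS mul0r eqxx.
rewrite /= mulf_eq0 invr_eq0 (negPf p0) (negPf q0) /= expf_eq0 (negPf p0) andbF.
congr Some; field.
by rewrite p0 q0.
Qed.

Lemma pt_scale (a p q : C) : a != 0 -> pt (a * p, a * q) = pt (p, q).
Proof.
move=> a0; rewrite /pt /= mulf_eq0 (negPf a0) /=.
case: eqP => // /eqP q0; congr Some; field; by rewrite a0 q0.
Qed.

Lemma nz_step (c d p q : C) : d != 0 -> (p, q) != (0, 0) ->
  (p ^+ 2 + c * p * q + d * q ^+ 2, p ^+ 2) != (0, 0).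
Proof.
move=> d0; rewrite !xpair_eqE; apply: contra => /andP [h1 h2].
have p0 : p = 0 by move: h2; rewrite expf_eq0 /= => /eqP.
have : d * q ^+ 2 = 0.
  by move/eqP: h1; rewrite p0 expr2 !mul0r mulr0 !add0r mul0r add0r.
move/eqP; rewrite mulf_eq0 (negPf d0) /= expf_eq0 /= => ->.
by rewrite p0 eqxx.
Qed.

Lemma pt_cross (x y : C * C) : pt x = pt y -> x.1 * y.2 = x.2 * y.1.
Proof.
rewrite /pt; case: eqP => hx; case: eqP => hy //.
  by rewrite hx hy mulr0 mul0r.
case => e; apply/eqP; rewrite -subr_eq0.
have -> : x.1 * y.2 - x.2 * y.1 = (x.1 / x.2 - y.1 / y.2) * (x.2 * y.2).
  field; apply/andP; split; exact/eqP.
by rewrite e subrr mul0r.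
Qed.

Lemma orbit_rep (t c d : C) (x0 : C * C) (k : nat) : t != 0 -> d != 0 -> x0 != (0, 0) ->
  rep t k (orb t (t * c) (t * d) k x0) != (0, 0) /\
  iter k (fcd c d) (pt x0) = pt (rep t k (orb t (t * c) (t * d) k x0)).
Proof.
move=> t0 d0; case: x0 => a b x00.
elim: k => [|k [IH1 IH2]].
  by rewrite /rep /= mul1r.
set y := orb t (t * c) (t * d) k (a, b).
rewrite iterS IH2.
have E : rep t k y = (y.1, t ^+ odd k * y.2) by [].
rewrite E in IH1 *.
rewrite fcd_pt //.
have -> : orb t (t * c) (t * d) k.+1 (a, b) = (if odd k then stl t (t * c) (t * d) else stf t (t * c) (t * d)) y by [].
case ok: (odd k); rewrite ok /= in IH1 *.
  rewrite expr1 in IH1 *.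
  have -> : rep t k.+1 (stl t (t * c) (t * d) y) =
     (y.1 ^+ 2 + c * y.1 * (t * y.2) + d * (t * y.2) ^+ 2, y.1 ^+ 2).
    rewrite /rep /stl /= ok /= mul1r; congr (_, _); ring.
  split => //; exact: nz_step.
rewrite expr0 mul1r in IH1 *.
have -> : rep t k.+1 (stf t (t * c) (t * d) y) =
   (t * (y.1 ^+ 2 + c * y.1 * y.2 + d * y.2 ^+ 2), t * y.1 ^+ 2).
  rewrite /rep /stf /= ok /= expr1; congr (_, _); ring.
rewrite pt_scale //; split => //.
move: (nz_step c d y.1 y.2 d0 IH1); rewrite !xpair_eqE !mulf_eq0 (negPf t0) /=.
by [].
Qed.

Lemma cvg_const (a : C) : cvgC (fun _ => a) a.
Proof. by move=> e e0; exists 0%N => k _; rewrite subrr normr0. Qed.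

Lemma cvg_sub0 (u : nat -> C) l : cvgC u l -> cvgC (fun k => u k - l) 0.
Proof. by move=> h e e0; have [N HN] := h e e0; exists N => k hk; rewrite subr0; apply: HN. Qed.
Arguments cvg_sub0 {u l}.


Lemma cvg_of0 (u : nat -> C) l : cvgC (fun k => u k - l) 0 -> cvgC u l.
Proof. by move=> h e e0; have [N HN] := h e e0; exists N => k hk; move: (HN k hk); rewrite subr0. Qed.
Arguments cvg_of0 {u l}.


Lemma cvg0_add (u v : nat -> C) : cvgC u 0 -> cvgC v 0 -> cvgC (fun k => u k + v k) 0.
Proof.
move=> hu hv e e0.
have e2 : 0 < e / 2%:R by rewrite divr_gt0 // ltr0n.
have [N1 H1] := hu _ e2; have [N2 H2] := hv _ e2.
exists (maxn N1 N2) => k hk.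
rewrite subr0; apply: (le_lt_trans (ler_normD _ _)).
have -> : e = e / 2%:R + e / 2%:R by field.
apply: ltrD.
  by move: (H1 k (leq_trans (leq_maxl _ _) hk)); rewrite subr0.
by move: (H2 k (leq_trans (leq_maxr _ _) hk)); rewrite subr0.
Qed.
Arguments cvg0_add {u v}.


Lemma cvg0_mul (u v : nat -> C) : cvgC u 0 -> cvgC v 0 -> cvgC (fun k => u k * v k) 0.
Proof.
move=> hu hv e e0.
have [N1 H1] := hu _ ltr01; have [N2 H2] := hv _ e0.
exists (maxn N1 N2) => k hk.
rewrite subr0 normrM -[e]mul1r.
move: (H1 k (leq_trans (leq_maxl _ _) hk)); rewrite subr0 => h1.
move: (H2 k (leq_trans (leq_maxr _ _) hk)); rewrite subr0 => h2.
by apply: ltr_pM.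
Qed.
Arguments cvg0_mul {u v}.


Lemma cvg0_scale (a : C) (u : nat -> C) : cvgC u 0 -> cvgC (fun k => a * u k) 0.
Proof.
move=> hu e e0.
have a1 : 0 < `|a| + 1 by apply: ltr_wpDl.
have e2 : 0 < e / (`|a| + 1) by rewrite divr_gt0.
have [N1 H1] := hu _ e2.
exists N1 => k hk.
rewrite subr0 normrM.
have -> : e = (`|a| + 1) * (e / (`|a| + 1)) by field; rewrite gt_eqF.
apply: ltr_pM => //; first by rewrite ltrDl ltr01.
by move: (H1 k hk); rewrite subr0.
Qed.
Arguments cvg0_scale a {u}.


Lemma cvg_ext (u v : nat -> C) l : (forall k, u k = v k) -> cvgC u l -> cvgC v l.
Proof. by move=> e h e0 he; have [N HN] := h e0 he; exists N => k hk; rewrite -e; apply: HN. Qed.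
Arguments cvg_ext {u v l}.

Lemma cvg_add (u v : nat -> C) a b : cvgC u a -> cvgC v b -> cvgC (fun k => u k + v k) (a + b).
Proof.
move=> /cvg_sub0 hu /cvg_sub0 hv; apply: cvg_of0.
apply: (cvg_ext _ (cvg0_add hu hv)) => k /=; ring.
Qed.
Arguments cvg_add {u v a b}.


Lemma cvg_mul (u v : nat -> C) a b : cvgC u a -> cvgC v b -> cvgC (fun k => u k * v k) (a * b).
Proof.
move=> /cvg_sub0 hu /cvg_sub0 hv; apply: cvg_of0.
have h := cvg0_add (cvg0_add (cvg0_mul hu hv) (cvg0_scale a hv)) (cvg0_scale b hu).
apply: (cvg_ext _ h) => k /=; ring.
Qed.
Arguments cvg_mul {u v a b}.


Lemma cvg_exp (u : nat -> C) a n : cvgC u a -> cvgC (fun k => u k ^+ n) (a ^+ n).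
Proof.
move=> h; elim: n => [|n IH].
  by rewrite expr0; apply: (cvg_ext _ (cvg_const 1)) => k; rewrite expr0.
by rewrite exprS; apply: (cvg_ext _ (cvg_mul h IH)) => k; rewrite exprS.
Qed.
Arguments cvg_exp {u a} n.


Lemma cvg_opp (u : nat -> C) a : cvgC u a -> cvgC (fun k => - u k) (- a).
Proof.
move=> h; have := cvg_mul (cvg_const (-1)) h; rewrite mulN1r.
by apply: (cvg_ext _) => k; rewrite mulN1r.
Qed.
Arguments cvg_opp {u a}.


Lemma cvg_uniq0 (u : nat -> C) l : (forall k, u k = 0) -> cvgC u l -> l = 0.
Proof.
move=> h0 h; apply/eqP; apply/negPn/negP => l0.
have lp : 0 < `|l| by rewrite normr_gt0.
have [N HN] := h `|l| lp.
by move: (HN N (leqnn N)); rewrite h0 sub0r normrN ltxx.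
Qed.

Lemma cvg_orb (t Cs Ds x1 x2 : nat -> C) t0 c0 d0 a1 a2 k :
  cvgC t t0 -> cvgC Cs c0 -> cvgC Ds d0 -> cvgC x1 a1 -> cvgC x2 a2 ->
  cvgC (fun j => (orb (t j) (Cs j) (Ds j) k (x1 j, x2 j)).1) (orb t0 c0 d0 k (a1, a2)).1 /\ cvgC (fun j => (orb (t j) (Cs j) (Ds j) k (x1 j, x2 j)).2) (orb t0 c0 d0 k (a1, a2)).2.
Proof.
move=> ht hC hD h1 h2; elim: k => [|k [IH1 IH2]] //=.
case: (odd k) => /=; split.
- apply: cvg_add; first apply: cvg_add.
  + exact: cvg_exp.
  + exact: cvg_mul (cvg_mul hC IH1) IH2.
  + exact: cvg_mul (cvg_mul ht hD) (cvg_exp _ IH2).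
- exact: cvg_exp.
- apply: cvg_add; first apply: cvg_add.
  + exact: cvg_mul ht (cvg_exp _ IH1).
  + exact: cvg_mul (cvg_mul hC IH1) IH2.
  + exact: cvg_mul hD (cvg_exp _ IH2).
- exact: cvg_exp.
Qed.

Definition uu (c d : C) (x : C * C) := (c * x.1 + d * x.2) / (d * x.2).

Lemma orb2 t c d j x : orb t c d (j.+1).*2 x = stl t c d (stf t c d (orb t c d j.*2 x)).
Proof. by rewrite doubleS /= odd_double. Qed.

Lemma orb1 t c d j x : orb t c d (j.*2).+1 x = stf t c d (orb t c d j.*2 x).
Proof. by rewrite /= odd_double. Qed.

Lemma two_step (c d : C) x : c != 0 -> d != 0 -> x.2 != 0 -> uu c d x != 0 ->
  (stl 0 c d (stf 0 c d x)).2 != 0 /\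
  uu c d (stl 0 c d (stf 0 c d x)) = uu c d x + (uu c d x)^-1 - 1 + c / d.
Proof.
case: x => p q /= c0 d0 q0; rewrite /uu /= => u0.
have s0 : c * p + d * q != 0 by move: u0; rewrite mulf_eq0 negb_or => /andP [].
have P0 : c * p * q + d * q ^+ 2 != 0.
  have -> : c * p * q + d * q ^+ 2 = q * (c * p + d * q) by ring.
  by rewrite mulf_neq0.
rewrite !mul0r !add0r addr0; split; first by rewrite expf_neq0.
field.
by rewrite s0 d0 q0 P0.
Qed.

Lemma uu_one (c d q : C) : d != 0 -> q != 0 -> uu c d (0, q) = 1.
Proof. by move=> d0 q0; rewrite /uu /= mulr0 add0r divff // mulf_neq0. Qed.

Lemma X_inv (c d : C) : c != 0 -> d != 0 -> 1 <= ReC (c / d) ->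
  forall j, (orb 0 c d j.*2 (1, 1)).2 != 0 /\ 1 < ReC (uu c d (orb 0 c d j.*2 (1, 1))).
Proof.
move=> c0 d0 he; elim => [|j [IH1 IH2]].
  split; first by rewrite /= oner_eq0.
  have -> : uu c d (orb 0 c d 0.*2 (1, 1)) = 1 + c / d by rewrite /uu /=; field.
  rewrite ReD Re1; lra.
rewrite orb2.
set x := orb 0 c d j.*2 (1, 1) in IH1 IH2 *.
have u0 : uu c d x != 0 by apply/eqP => e; move: IH2; rewrite e Re0; lra.
have [h1 h2] := two_step c d x c0 d0 IH1 u0.
split => //; rewrite h2 !ReD ReN Re1.
have := ReV_pos _ (lt_trans ltr01 IH2); lra.
Qed.

Lemma Y_inv (c d : C) : c != 0 -> d != 0 -> ReC (c / d) <= 1 ->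
  forall j, (orb 0 c d j.*2 (-(2%:R * d), c)).2 != 0 /\
   ReC (uu c d (orb 0 c d j.*2 (-(2%:R * d), c))) <= -1 /\
   ((0 < j)%N -> ReC (uu c d (orb 0 c d j.*2 (-(2%:R * d), c))) < -1).
Proof.
move=> c0 d0 he; elim => [|j [IH1 [IH2 _]]].
  split => //.
  have -> : uu c d (orb 0 c d 0.*2 (-(2%:R * d), c)) = -1 by rewrite /uu /=; field; rewrite c0 d0.
  rewrite ReN Re1; split => //; lra.
rewrite orb2.
set x := orb 0 c d j.*2 _ in IH1 IH2 *.
have u0 : uu c d x != 0 by apply/eqP => e; move: IH2; rewrite e Re0; lra.
have [h1 h2] := two_step c d x c0 d0 IH1 u0.
have hn : ReC (uu c d x) < 0 by lra.
have := ReV_neg _ hn.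
rewrite h2 !ReD ReN Re1 => hv.
split => //; split; first by lra.
by move=> _; lra.
Qed.

Lemma Xc0 (d : C) : d != 0 -> forall k, (orb 0 0 d k (1, 1)).1 != 0 /\ (orb 0 0 d k (1, 1)).2 != 0.
Proof.
move=> d0; elim => [|k [IH1 IH2]] /=; first by rewrite oner_eq0.
case: (odd k) => /=; rewrite !mul0r ?addr0 ?add0r; split; by rewrite ?mulf_neq0 ?expf_neq0.
Qed.

Lemma Xd0 (c : C) : c != 0 -> forall j,
  (orb 0 c 0 j.*2 (1, 1)).2 != 0 /\ (orb 0 c 0 j.*2 (1, 1)).1 = (j.+1)%:R * (orb 0 c 0 j.*2 (1, 1)).2.
Proof.
move=> c0; elim => [|j [IH1 IH2]].
  by rewrite /= oner_eq0 mul1r.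
rewrite orb2.
set x := orb 0 c 0 j.*2 _ in IH1 IH2 *.
rewrite /stl /stf /= !mul0r ?add0r ?addr0 ?mulr0 ?addr0 IH2.
have n0 : (j.+1)%:R != 0 :> C by rewrite pnatr_eq0.
split; first by rewrite !expf_neq0 // !mulf_neq0.
rewrite -[j.+2]addn1 natrD; ring.
Qed.

Lemma limit_contra (c d : C) k m : (c, d) != (0, 0) -> (1 <= k)%N ->
  (orb 0 c d k (1, 1)).1 = 0 ->
  (orb 0 c d m (-(2%:R * d), c)).1 * c
    - 0 ^+ odd m * (orb 0 c d m (-(2%:R * d), c)).2 * (-(2%:R * d)) = 0 ->
  (1 <= m)%N -> False.
Proof.
move=> cd0 k1 hX hY m1.
have [c0|c0] := eqVneq c 0.
  have d0 : d != 0 by move: cd0; rewrite c0 xpair_eqE eqxx.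
  have [h _] := Xc0 d d0 k; rewrite c0 in hX; by rewrite hX eqxx in h.
have ek := odd_double_half k.
have kk : k = (k./2.*2).+1 \/ k = k./2.*2.
  by case: (odd k) ek => e; [left|right]; rewrite -[LHS]e ?add1n ?add0n.
have [d0|d0] := eqVneq d 0.
  move: hX; rewrite d0.
  have [h1 h2] := Xd0 c c0 k./2.
  case: kk => ->.
    rewrite orb1 /stf /= !mul0r !add0r addr0 h2 => /eqP.
    by apply/negP; rewrite !mulf_neq0 // pnatr_eq0.
  by rewrite h2 => /eqP; apply/negP; rewrite mulf_neq0 // pnatr_eq0.
case: (lerP 1 (ReC (c / d))) => hr.
  have [h1 h2] := X_inv c d c0 d0 hr k./2.
  move: hX; case: kk => ->.
    rewrite orb1 /stf /= !mul0r !add0r.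
    set x := orb 0 c d k./2.*2 _ in h1 h2 *.
    have -> : c * x.1 * x.2 + d * x.2 ^+ 2 = (d * x.2 ^+ 2) * uu c d x.
      by rewrite /uu; field; rewrite d0 h1.
    move/eqP; rewrite mulf_eq0 mulf_eq0 (negPf d0) expf_eq0 (negPf h1) /= => /eqP e.
    by move: h2; rewrite e Re0; lra.
  move=> e.
  move: h2; rewrite (surjective_pairing (orb _ _ _ _ _)) e uu_one // Re1; lra.
have [h1 [h2 h3]] := Y_inv c d c0 d0 (ltW hr) m./2.
set x := orb 0 c d m./2.*2 _ in h1 h2 h3.
have em := odd_double_half m.
have mm : m = (m./2.*2).+1 \/ m = m./2.*2.
  by case: (odd m) em => e; [left|right]; rewrite -[LHS]e ?add1n ?add0n.
case: mm => mm; rewrite mm in hY.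
  move: hY; rewrite orb1 /= odd_double /= expr1 !mul0r subr0 -/x.
  rewrite add0r.
  have -> : c * x.1 * x.2 + d * x.2 ^+ 2 = (d * x.2 ^+ 2) * uu c d x.
    by rewrite /uu; field; rewrite d0 h1.
  move=> h.
  have hA : d * x.2 ^+ 2 * uu c d x = 0 by apply: (mulIf c0); rewrite mul0r.
  have e : uu c d x = 0 by apply: (mulfI (mulf_neq0 d0 (expf_neq0 2 h1))); rewrite mulr0.
  by move: h2; rewrite e Re0; lra.
have j0 : (0 < m./2)%N by move: m1; rewrite mm; case: (m./2).
move: hY; rewrite odd_double expr0 mul1r -/x => hY.
have e : uu c d x = -1.
  rewrite /uu; apply: (mulIf (mulf_neq0 d0 h1)); rewrite divfK ?mulf_neq0 //.
  apply/eqP; rewrite -subr_eq0; apply/eqP; rewrite -hY; ring.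
by move: (h3 j0); rewrite e ReN Re1; lra.
Qed.



End S.
Arguments orb {R}.
Arguments pt {R}.
Arguments rep {R}.
Arguments stf {R}.
Arguments stl {R}.
Arguments cvg_orb {R t Cs Ds x1 x2 t0 c0 d0 a1 a2} k.
Arguments orbit_rep {R t} c {d x0} k.
Arguments cvg_uniq0 {R u l}.
Arguments cvg_const {R} a.
Arguments cvg_mul {R u v a b}.
Arguments cvg_add {R u v a b}.
Arguments cvg_opp {R u a}.
Arguments cvg_exp {R u a} n.
Arguments cvg_ext {R u v l}.
Arguments pt_cross {R x y}.
Arguments limit_contra {R c d k m}.

Theorem lemma2p2 (R : realType) (n m : nat) :
  (3 <= n)%N -> (1 <= m)%N ->
  forall c0 d0 : R[i], (c0, d0) != (0, 0) ->
  ~ (in_closure_at_infinity (@Xset R n) c0 d0 /\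
     in_closure_at_infinity (@Yset R m) c0 d0).
Proof.
move=> n3 m1 c0 d0 cd0 [[u [lam [hX [hl [hc [hd hl0]]]]]] [v [mu [hY [hm [hc' [hd' hm0]]]]]]].
have Xk : forall k, (orb (lam k) (lam k * (u k).1) (lam k * (u k).2) (n - 2) (1, 1)).1 = 0.
  move=> k; have [dk hk] := hX k.
  have x00 : ((1 : R[i]), (1 : R[i])) != (0, 0) by rewrite xpair_eqE oner_eq0.
  have [_ h] := orbit_rep (u k).1 (n - 2) (hl k) dk x00.
  have en : n = (n - 2 + 2)%N by rewrite subnK // ltnW.
  rewrite en iterD /= eqxx /= in hk.
  have e1 : Some (1 : R[i]) = pt (1, 1) by rewrite /pt /= oner_eq0 divr1.
  move: hk; rewrite e1.
  rewrite h /pt /rep /=; case: eqP => // h2 [].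
  move/eqP; rewrite mulf_eq0 invr_eq0 => /orP [/eqP -> //|/eqP h3].
  by case: h2.
have hXl : (orb 0 c0 d0 (n - 2) (1, 1)).1 = 0.
  have [h _] := cvg_orb (n - 2) hl0 hc hd (cvg_const 1) (cvg_const 1).
  exact: (cvg_uniq0 Xk h).
pose Y1 k := (orb (mu k) (mu k * (v k).1) (mu k * (v k).2) m (mu k * - (2%:R * (v k).2), mu k * (v k).1)).
have Yk : forall k, (Y1 k).1 * (mu k * (v k).1) - (mu k) ^+ odd m * (Y1 k).2 * (mu k * - (2%:R * (v k).2)) = 0.
  move=> k; have [dk hk] := hY k.
  have x00 : (mu k * - (2%:R * (v k).2), mu k * (v k).1) != (0, 0).
    rewrite xpair_eqE negb_and; apply/orP; left.
    by rewrite mulf_neq0 ?hm // oppr_eq0 mulf_neq0 // pnatr_eq0.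
  have [_ h] := orbit_rep (v k).1 m (hm k) dk x00.
  have e : crit2 (v k).1 (v k).2 = pt (mu k * - (2%:R * (v k).2), mu k * (v k).1).
    by rewrite pt_scale ?hm.
  move: hk; rewrite e h => /pt_cross /=; rewrite /rep /= -/(Y1 k) => ->; ring.
have hYl : (orb 0 c0 d0 m (- (2%:R * d0), c0)).1 * c0
    - 0 ^+ odd m * (orb 0 c0 d0 m (- (2%:R * d0), c0)).2 * (- (2%:R * d0)) = 0.
  have h2d : cvgC (fun k => mu k * - (2%:R * (v k).2)) (- (2%:R * d0)).
    have := cvg_mul (cvg_const (- 2%:R)) hd'.
    rewrite mulNr -mulNr; apply: cvg_ext => k; ring.
  have [h1 h2] := cvg_orb m hm0 hc' hd' h2d hc'.
  apply: (cvg_uniq0 Yk).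
  apply: cvg_add; first exact: cvg_mul h1 hc'.
  apply: cvg_opp; apply: cvg_mul h2d; apply: cvg_mul h2; exact: cvg_exp.
have k1 : (1 <= n - 2)%N by rewrite subn_gt0.
exact: (limit_contra cd0 k1 hXl hYl m1).
Qed.
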